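(* Let $(A,\diamond,\ast,\varepsilon)$ be a pre-$F$-manifold color algebra, and define for homogeneous $x,y\in A$ (extended bilinearly) $x\cdot y=x\diamond y+\varepsilon(x,y)\,y\diamond x$ and $[x,y]=x\ast y-\varepsilon(x,y)\,y\ast x$. Then: (1) $(A,\cdot,[\,,\,],\varepsilon)$ is an $F$-manifold color algebra; (2) $(A,L,\mathfrak L)$ is a representation of the $F$-manifold color algebra $(A,\cdot,[\,,\,],\varepsilon)$, where $L,\mathfrak L:A\to\mathfrak{gl}(A)$ are given by $L_x y=x\ast y$ and $\mathfrak L_x y=x\diamond y$.
   Context: $G$ is an abelian group and $\varepsilon:G\times G\to\mathbb K\setminus\{0\}$ a skew-symmetric bicharacter: $\varepsilon(a,b)\varepsilon(b,a)=1$, $\varepsilon(a,b+c)=\varepsilon(a,b)\varepsilon(a,c)$, $\varepsilon(a+b,c)=\varepsilon(a,c)\varepsilon(b,c)$; $\mathbb K$ algebraically closed of characteristic zero, spaces finite-dimensional. For homogeneous $x\in A_a,y\in A_b$, $\varepsilon(x,y)$ means $\varepsilon(a,b)$, $\varepsilon(x,y+z)$ means $\varepsilon(a,b+c)$, etc. A Zinbiel color algebra $(A,\diamond,\varepsilon)$: $G$-graded $A$ with bilinear $\diamond$, $A_a\diamond A_b\subseteq A_{a+b}$, $x\diamond(y\diamond z)=(x\diamond y)\diamond z+\varepsilon(x,y)(y\diamond x)\diamond z$. A pre-Lie color algebra $(A,\ast,\varepsilon)$: $G$-graded $A$ with bilinear $\ast$, $A_a\ast A_b\subseteq A_{a+b}$,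 $(x\ast y)\ast z-x\ast(y\ast z)=\varepsilon(x,y)((y\ast x)\ast z-y\ast(x\ast z))$. A pre-$F$-manifold color algebra $(A,\diamond,\ast,\varepsilon)$ is such that $(A,\diamond,\varepsilon)$ is a Zinbiel color algebra, $(A,\ast,\varepsilon)$ is a pre-Lie color algebra, and for all homogeneous $x,y,z,w$: $F_1(x\cdot y,z,w)=x\diamond F_1(y,z,w)+\varepsilon(x,y)y\diamond F_1(x,z,w)$ and $(F_1(x,y,z)+\varepsilon(y,z)F_1(x,z,y)+\varepsilon(x,y+z)F_2(y,z,x))\diamond w=\varepsilon(x,y+z)F_2(y,z,x\diamond w)-x\diamond F_2(y,z,w)$, where $F_1(x,y,z)=x\ast(y\diamond z)-\varepsilon(x,y)y\diamond(x\ast z)-[x,y]\diamond z$ and $F_2(x,y,z)=x\diamond(y\ast z)+\varepsilon(x,y)y\diamond(x\ast z)-(x\cdot y)\ast z$, with $\cdot$ and $[\,,\,]$ as in the claim. An $\varepsilon$-commutative associative algebra: $G$-graded associative $(A,\cdot)$ with $A_aA_b\subseteq A_{a+b}$ and $x\cdot y=\varepsilon(x,y)y\cdot x$. A Lie color algebra: $G$-graded with bilinear $[\,,\,]$, $[A_a,A_b]\subseteq A_{a+b}$, $[x,y]=-\varepsilon(x,y)[y,x]$, $\varepsilon(z,x)[x,[y,z]]+\varepsilon(y,z)[z,[x,y]]+\varepsilon(x,y)[y,[z,x]]=0$. An $F$-manifold color algebra is $(A,\cdot,[\,,\,],\varepsilon)$ with $(A,\cdot,\varepsilon)$ an $\varepsilon$-commutative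 associative algebra and $(A,[\,,\,],\varepsilon)$ a Lie color algebra such that $P_{x\cdot y}(z,w)=x\cdot P_y(z,w)+\varepsilon(x,y)y\cdot P_x(z,w)$, where $P_x(y,z)=[x,y\cdot z]-[x,y]\cdot z-\varepsilon(x,y)y\cdot[x,z]$. A representation of such an $A$ on a $G$-graded space $V$ is a triple $(V,\rho,\mu)$ where $\rho:A\to\mathfrak{gl}(V)$ satisfies $\rho(x)V_a\subseteq V_{a+b}$ for $x\in A_b$ and $\rho([x,y])=\rho(x)\rho(y)-\varepsilon(x,y)\rho(y)\rho(x)$, $\mu:A\to\mathfrak{gl}(V)$ satisfies the same degree condition and $\mu(x\cdot y)=\mu(x)\mu(y)$, and for all homogeneous $x_1,x_2,x_3$: $R(x_1\cdot x_2,x_3)=\mu(x_1)R(x_2,x_3)+\varepsilon(x_1,x_2)\mu(x_2)R(x_1,x_3)$ and $\mu(P_{x_1}(x_2,x_3))=\varepsilon(x_1,x_2+x_3)S(x_2,x_3)\mu(x_1)-\mu(x_1)S(x_2,x_3)$, where $R(x_1,x_2)=\rho(x_1)\mu(x_2)-\varepsilon(x_1,x_2)\mu(x_2)\rho(x_1)-\mu([x_1,x_2])$ and $S(x_1,x_2)=\mu(x_1)\rho(x_2)+\varepsilon(x_1,x_2)\mu(x_2)\rho(x_1)-\rho(x_1\cdot x_2)$. *)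

(* Defs.v *)
From HB Require Import structures.
From mathcomp Require Import all_boot all_order all_algebra.
Set Implicit Arguments. Unset Strict Implicit. Unset Printing Implicit Defensive.
Import GRing.Theory.
Local Open Scope ring_scope.

Section ColorDefs.
Variables (G : zmodType) (K : fieldType).

Definition skew_bichar (eps : G -> G -> K) :=
  [/\ forall a b, eps a b != 0,
      forall a b, eps a b * eps b a = 1,
      forall a b c, eps a (b + c) = eps a b * eps a c &
      forall a b c, eps (a + b) c = eps a c * eps b c].

(* A G-grading of a finite-dimensional K-space V: V = (+)_{a in G} V_a. *)
Definition grading (V : vectType K) (Vg : G -> {vspace V}) :=
  (forall v : V, exists s : seq G, uniq s /\
     exists f : G -> V, (forall a, f a \in Vg a) /\ v = \sum_(a <- s) f a) /\
  (forall (s : seq G) (f : G -> V), uniq s -> (forall a, f a \in Vg a) ->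
     \sum_(a <- s) f a = 0 -> forall a, a \in s -> f a = 0).

Variable (A : vectType K).

Definition bilinear_op (op : A -> A -> A) :=
  (forall k x y z, op (k *: x + y) z = k *: op x z + op y z) /\
  (forall k x y z, op x (k *: y + z) = k *: op x y + op x z).

Variables (Ag : G -> {vspace A}) (eps : G -> G -> K).

Definition graded_op (op : A -> A -> A) :=
  bilinear_op op /\
  (forall a b x y, x \in Ag a -> y \in Ag b -> op x y \in Ag (a + b)).

Definition zinbiel_color (diamond : A -> A -> A) :=
  graded_op diamond /\
  forall a b c x y z, x \in Ag a -> y \in Ag b -> z \in Ag c ->
    diamond x (diamond y z) =
    diamond (diamond x y) z + eps a b *: diamond (diamond y x) z.

Definition prelie_color (star : A -> A -> A) :=
  graded_op star /\
  forall a b c x y z, x \in Ag a -> y \in Ag b -> z \in Ag c ->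
    star (star x y) z - star x (star y z) =
    eps a b *: (star (star y x) z - star y (star x z)).

(* x . y and [x,y] for homogeneous x in A_a, y in A_b *)
Definition sym_prod (diamond : A -> A -> A) a b x y :=
  diamond x y + eps a b *: diamond y x.
Definition skew_prod (star : A -> A -> A) a b x y :=
  star x y - eps a b *: star y x.

Definition F1 (diamond star : A -> A -> A) a b x y z :=
  star x (diamond y z) - eps a b *: diamond y (star x z)
  - diamond (skew_prod star a b x y) z.
Definition F2 (diamond star : A -> A -> A) a b x y z :=
  diamond x (star y z) + eps a b *: diamond y (star x z)
  - star (sym_prod diamond a b x y) z.

Definition preF_color (diamond star : A -> A -> A) :=
  [/\ zinbiel_color diamond, prelie_color star,
  (forall a b c d x y z w,
     x \in Ag a -> y \in Ag b -> z \in Ag c -> w \in Ag d ->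
     F1 diamond star (a + b) c (sym_prod diamond a b x y) z w =
     diamond x (F1 diamond star b c y z w)
     + eps a b *: diamond y (F1 diamond star a c x z w)) &
  (forall a b c d x y z w,
     x \in Ag a -> y \in Ag b -> z \in Ag c -> w \in Ag d ->
     diamond (F1 diamond star a b x y z + eps b c *: F1 diamond star a c x z y
              + eps a (b + c) *: F2 diamond star b c y z x) w =
     eps a (b + c) *: F2 diamond star b c y z (diamond x w)
     - diamond x (F2 diamond star b c y z w))].

Definition eps_comm_assoc (dot : A -> A -> A) :=
  [/\ graded_op dot,
      (forall x y z, dot (dot x y) z = dot x (dot y z)) &
      (forall a b x y, x \in Ag a -> y \in Ag b -> dot x y = eps a b *: dot y x)].

Definition lie_color (br : A -> A -> A) :=
  [/\ graded_op br,
      (forall a b x y, x \in Ag a -> y \in Ag b -> br x y = - (eps a b *: br y x)) &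
      (forall a b c x y z, x \in Ag a -> y \in Ag b -> z \in Ag c ->
         eps c a *: br x (br y z) + eps b c *: br z (br x y)
         + eps a b *: br y (br z x) = 0)].

Definition Pop (dot br : A -> A -> A) a b x y z :=
  br x (dot y z) - dot (br x y) z - eps a b *: dot y (br x z).

Definition F_manifold_color (dot br : A -> A -> A) :=
  [/\ eps_comm_assoc dot, lie_color br &
      forall a b c d x y z w,
        x \in Ag a -> y \in Ag b -> z \in Ag c -> w \in Ag d ->
        Pop dot br (a + b) c (dot x y) z w =
        dot x (Pop dot br b c y z w) + eps a b *: dot y (Pop dot br a c x z w)].

Variables (V : vectType K) (Vg : G -> {vspace V}).

Definition rep_map (f : A -> V -> V) :=
  [/\ (forall x k u v, f x (k *: u + v) = k *: f x u + f x v),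
      (forall k x y v, f (k *: x + y) v = k *: f x v + f y v) &
      (forall a b x v, x \in Ag b -> v \in Vg a -> f x v \in Vg (a + b))].

Definition Rop (br : A -> A -> A) (rho mu : A -> V -> V) a1 a2 x1 x2 v :=
  rho x1 (mu x2 v) - eps a1 a2 *: mu x2 (rho x1 v) - mu (br x1 x2) v.
Definition Sop (dot : A -> A -> A) (rho mu : A -> V -> V) a1 a2 x1 x2 v :=
  mu x1 (rho x2 v) + eps a1 a2 *: mu x2 (rho x1 v) - rho (dot x1 x2) v.

Definition FM_rep (dot br : A -> A -> A) (rho mu : A -> V -> V) :=
  grading Vg /\ rep_map rho /\ rep_map mu /\
  [/\ (forall a b x y v, x \in Ag a -> y \in Ag b ->
         rho (br x y) v = rho x (rho y v) - eps a b *: rho y (rho x v)),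
      (forall x y v, mu (dot x y) v = mu x (mu y v)),
      (forall a1 a2 a3 x1 x2 x3 v,
         x1 \in Ag a1 -> x2 \in Ag a2 -> x3 \in Ag a3 ->
         Rop br rho mu (a1 + a2) a3 (dot x1 x2) x3 v =
         mu x1 (Rop br rho mu a2 a3 x2 x3 v)
         + eps a1 a2 *: mu x2 (Rop br rho mu a1 a3 x1 x3 v)) &
      (forall a1 a2 a3 x1 x2 x3 v,
         x1 \in Ag a1 -> x2 \in Ag a2 -> x3 \in Ag a3 ->
         mu (Pop dot br a1 a2 x1 x2 x3) v =
         eps a1 (a2 + a3) *: Sop dot rho mu a2 a3 x2 x3 (mu x1 v)
         - mu x1 (Sop dot rho mu a2 a3 x2 x3 v))].

End ColorDefs.

(* Main.v *)
Require Import Defs.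
From HB Require Import structures.
From mathcomp Require Import all_boot all_order all_algebra.
From mathcomp Require Import ring.
Set Implicit Arguments. Unset Strict Implicit. Unset Printing Implicit Defensive.
Import GRing.Theory.
Local Open Scope ring_scope.

Inductive vexp (R : Type) : Type :=
  VAtom of nat | VAdd of vexp R & vexp R | VOpp of vexp R | VScl of R & vexp R | VZero.

Section VNorm.
Variables (R : pzRingType) (V : lmodType R).

Fixpoint veval (env : seq V) (e : vexp R) : V :=
  match e with
  | VAtom i => nth 0 env i
  | VAdd e1 e2 => veval env e1 + veval env e2
  | VOpp e => - veval env e
  | VScl k e => k *: veval env e
  | VZero => 0
  end.

Fixpoint vcoef (e : vexp R) (i : nat) : R :=
  match e with
  | VAtom j => if i == j then 1 else 0
  | VAdd e1 e2 => vcoef e1 i + vcoef e2 i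
  | VOpp e => - vcoef e i
  | VScl k e => k * vcoef e i
  | VZero => 0
  end.

Lemma veval_sum env e :
  veval env e = \sum_(i < size env) vcoef e i *: nth 0 env i.
Proof.
elim: e => [j|e1 IH1 e2 IH2|e IH|k e IH|] /=.
- case: (ltnP j (size env)) => hj.
    rewrite (bigD1 (Ordinal hj)) //= eqxx scale1r big1 ?addr0 // => i hi.
    by rewrite ifN ?scale0r.
  rewrite nth_default // big1 // => i _.
  by rewrite ifN ?scale0r // ltn_eqF // (leq_trans (ltn_ord i) hj).
- by rewrite IH1 IH2 -big_split; apply: eq_bigr => i _; rewrite scalerDl.
- by rewrite IH -sumrN; apply: eq_bigr => i _; rewrite scaleNr.
- by rewrite IH scaler_sumr; apply: eq_bigr => i _; rewrite scalerA.
- by rewrite big1 // => i _; rewrite scale0r.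
Qed.

Fixpoint allP (n : nat) (P : nat -> Prop) : Prop :=
  match n with 0 => True | S n => P n /\ allP n P end.

Lemma allPP n P : allP n P -> forall i, (i < n)%N -> P i.
Proof.
elim: n => // n IH /= [Pn H] i; rewrite ltnS leq_eqVlt => /orP[/eqP->//|].
exact: IH.
Qed.

Lemma veval_eq env e1 e2 :
  allP (size env) (fun i => vcoef e1 i = vcoef e2 i) ->
  veval env e1 = veval env e2.
Proof.
move=> h; rewrite !veval_sum; apply: eq_bigr => i _.
by rewrite (allPP h (ltn_ord i)).
Qed.
End VNorm.

Ltac add_if_new e l :=
  lazymatch l with
  | nil => constr:(e :: l)
  | e :: _ => l
  | ?h :: ?t => let t' := add_if_new e t in constr:(h :: t')
  end.

Ltac find_idx e l :=
  lazymatch l with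
  | e :: _ => constr:(0%N)
  | _ :: ?t => let n := find_idx e t in constr:(S n)
  end.

Ltac reify_atoms e l :=
  lazymatch e with
  | ?a + ?b => let l1 := reify_atoms a l in reify_atoms b l1
  | - ?a => reify_atoms a l
  | ?k *: ?a => reify_atoms a l
  | 0 => l
  | _ => add_if_new e l
  end.

Ltac reify R e l :=
  lazymatch e with
  | ?a + ?b => let ra := reify R a l in let rb := reify R b l in constr:(@VAdd R ra rb)
  | - ?a => let ra := reify R a l in constr:(@VOpp R ra)
  | ?k *: ?a => let ra := reify R a l in constr:(@VScl R k ra)
  | 0 => constr:(@VZero R)
  | _ => let n := find_idx e l in constr:(@VAtom R n)
  end.

Ltac vreify R :=
  lazymatch goal with |- ?lhs = ?rhs =>
    let T := type of lhs in
    let l0 := reify_atoms lhs (@nil T) in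
    let l1 := reify_atoms rhs l0 in
    let e1 := reify R lhs l1 in
    let e2 := reify R rhs l1 in
    apply: (@veval_eq R _ l1 e1 e2); simpl
  end.


Section Bil.
Variables (K : fieldType) (A : vectType K) (op : A -> A -> A).
Hypothesis Hop : bilinear_op op.
Lemma opDl x y z : op (x + y) z = op x z + op y z.
Proof. by have := (Hop.1 1 x y z); rewrite !scale1r. Qed.
Lemma opDr x y z : op x (y + z) = op x y + op x z.
Proof. by have := (Hop.2 1 x y z); rewrite !scale1r. Qed.
Lemma op0l z : op 0 z = 0.
Proof. by apply: (addrI (op 0 z)); rewrite addr0 -opDl addr0. Qed.
Lemma op0r z : op z 0 = 0.
Proof. by apply: (addrI (op z 0)); rewrite addr0 -opDr addr0. Qed.
Lemma opZl k x z : op (k *: x) z = k *: op x z.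
Proof. by have := (Hop.1 k x 0 z); rewrite !addr0 op0l addr0. Qed.
Lemma opZr k x z : op z (k *: x) = k *: op z x.
Proof. by have := (Hop.2 k z x 0); rewrite !addr0 op0r addr0. Qed.
Lemma opNl x z : op (- x) z = - op x z.
Proof. by rewrite -scaleN1r opZl scaleN1r. Qed.
Lemma opNr x z : op z (- x) = - op z x.
Proof. by rewrite -scaleN1r opZr scaleN1r. Qed.
End Bil.

Section Main.
Variables (G : zmodType) (K : fieldType) (A : vectType K)
    (Ag : G -> {vspace A}) (eps : G -> G -> K)
    (diamond star dot br : A -> A -> A).
Hypotheses (Heps : skew_bichar eps) (Hgr : grading Ag)
  (HpF : preF_color Ag eps diamond star)
  (Bdot : bilinear_op dot) (Bbr : bilinear_op br)
  (Hdot : forall a b x y, x \in Ag a -> y \in Ag b ->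
     dot x y = sym_prod eps diamond a b x y)
  (Hbr : forall a b x y, x \in Ag a -> y \in Ag b ->
     br x y = skew_prod eps star a b x y).

Lemma epsNZ a b : eps a b != 0. Proof. by case: Heps. Qed.
Lemma epsM a b : eps a b * eps b a = 1. Proof. by case: Heps. Qed.
Lemma epsDr a b c : eps a (b + c) = eps a b * eps a c. Proof. by case: Heps. Qed.
Lemma epsDl a b c : eps (a + b) c = eps a c * eps b c. Proof. by case: Heps. Qed.
Lemma epsV a b : eps b a = (eps a b)^-1.
Proof. by apply: (mulfI (epsNZ a b)); rewrite mulfV ?epsNZ // epsM. Qed.

Lemma Bd : bilinear_op diamond. Proof. by case: HpF => [[[h _] _] _ _ _]; exact: h. Qed.
Lemma Bs : bilinear_op star. Proof. by case: HpF => _ [[h _] _] _ _; exact: h. Qed.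
Lemma dmem a b x y : x \in Ag a -> y \in Ag b -> diamond x y \in Ag (a + b).
Proof. case: HpF => [[[_ h] _] _ _ _]; exact: h. Qed.
Lemma smem a b x y : x \in Ag a -> y \in Ag b -> star x y \in Ag (a + b).
Proof. case: HpF => _ [[_ h] _] _ _; exact: h. Qed.
Lemma Zin a b c x y z : x \in Ag a -> y \in Ag b -> z \in Ag c ->
    diamond x (diamond y z) =
    diamond (diamond x y) z + eps a b *: diamond (diamond y x) z.
Proof. case: HpF => [[_ h] _ _ _]; exact: h. Qed.
Lemma PL a b c x y z : x \in Ag a -> y \in Ag b -> z \in Ag c ->
    star (star x y) z - star x (star y z) =
    eps a b *: (star (star y x) z - star y (star x z)).
Proof. case: HpF => _ [_ h] _ _; exact: h. Qed.
Lemma HF1 a b c d x y z w :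
     x \in Ag a -> y \in Ag b -> z \in Ag c -> w \in Ag d ->
     F1 eps diamond star (a + b) c (sym_prod eps diamond a b x y) z w =
     diamond x (F1 eps diamond star b c y z w)
     + eps a b *: diamond y (F1 eps diamond star a c x z w).
Proof. case: HpF => _ _ h _; exact: h. Qed.
Lemma HF2 a b c d x y z w :
     x \in Ag a -> y \in Ag b -> z \in Ag c -> w \in Ag d ->
     diamond (F1 eps diamond star a b x y z + eps b c *: F1 eps diamond star a c x z y
              + eps a (b + c) *: F2 eps diamond star b c y z x) w =
     eps a (b + c) *: F2 eps diamond star b c y z (diamond x w)
     - diamond x (F2 eps diamond star b c y z w).
Proof. case: HpF => _ _ _ h; exact: h. Qed.
Lemma dotE a b x y : x \in Ag a -> y \in Ag b ->
  dot x y = diamond x y + eps a b *: diamond y x.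
Proof. exact: Hdot. Qed.
Lemma brE a b x y : x \in Ag a -> y \in Ag b ->
  br x y = star x y - eps a b *: star y x.
Proof. exact: Hbr. Qed.
Lemma dotmem a b x y : x \in Ag a -> y \in Ag b -> dot x y \in Ag (a + b).
Proof.
move=> hx hy; rewrite (dotE hx hy); apply: memvD; [exact: dmem | apply: memvZ; rewrite addrC; exact: dmem].
Qed.
Lemma brmem a b x y : x \in Ag a -> y \in Ag b -> br x y \in Ag (a + b).
Proof.
move=> hx hy; rewrite (brE hx hy); apply: memvB; [exact: smem | apply: memvZ; rewrite addrC; exact: smem].
Qed.

Ltac lin := repeat first
  [ rewrite (opDl Bd) | rewrite (opDr Bd) | rewrite (opNl Bd) | rewrite (opNr Bd)
  | rewrite (opZl Bd) | rewrite (opZr Bd) | rewrite (op0l Bd) | rewrite (op0r Bd)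
  | rewrite (opDl Bs) | rewrite (opDr Bs) | rewrite (opNl Bs) | rewrite (opNr Bs)
  | rewrite (opZl Bs) | rewrite (opZr Bs) | rewrite (op0l Bs) | rewrite (op0r Bs)
  | rewrite (opDl Bdot) | rewrite (opDr Bdot) | rewrite (opNl Bdot) | rewrite (opNr Bdot)
  | rewrite (opZl Bdot) | rewrite (opZr Bdot) | rewrite (op0l Bdot) | rewrite (op0r Bdot)
  | rewrite (opDl Bbr) | rewrite (opDr Bbr) | rewrite (opNl Bbr) | rewrite (opNr Bbr)
  | rewrite (opZl Bbr) | rewrite (opZr Bbr) | rewrite (op0l Bbr) | rewrite (op0r Bbr) ].

Ltac coefs := repeat split;
  first [ ring | field; by rewrite ?epsNZ ].

Ltac vsolve := lin; rewrite ?epsDl ?epsDr; vreify K; coefs.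

Lemma zin_sym a b c x y z : x \in Ag a -> y \in Ag b -> z \in Ag c ->
  diamond x (diamond y z) = eps a b *: diamond y (diamond x z).
Proof.
move=> hx hy hz; rewrite (Zin hx hy hz) (Zin hy hx hz) (epsV a b); vsolve.
Qed.

Lemma Zsolve a b c x y z : x \in Ag a -> y \in Ag b -> z \in Ag c ->
  diamond (diamond x y) z =
  diamond x (diamond y z) - eps a b *: diamond (diamond y x) z.
Proof. by move=> hx hy hz; rewrite (Zin hx hy hz) addrK. Qed.

Lemma PLsolve a b c x y z : x \in Ag a -> y \in Ag b -> z \in Ag c ->
  star (star x y) z =
  star x (star y z) + eps a b *: (star (star y x) z - star y (star x z)).
Proof. by move=> hx hy hz; rewrite -(PL hx hy hz) addrC subrK. Qed.

Lemma assoc_h a b c x y z : x \in Ag a -> y \in Ag b -> z \in Ag c ->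
  dot (dot x y) z = dot x (dot y z).
Proof.
move=> hx hy hz.
rewrite (dotE (dotmem hx hy) hz) (dotE hx (dotmem hy hz)) (dotE hx hy) (dotE hy hz).
lin.
rewrite (Zin hx hy hz) (zin_sym hx hz hy) (Zsolve hy hz hx) (zin_sym hy hz hx).
vsolve.
Qed.

Lemma comm_h a b x y : x \in Ag a -> y \in Ag b -> dot x y = eps a b *: dot y x.
Proof. move=> hx hy; rewrite (dotE hx hy) (dotE hy hx) (epsV a b); vsolve. Qed.

Lemma skew_h a b x y : x \in Ag a -> y \in Ag b -> br x y = - (eps a b *: br y x).
Proof. move=> hx hy; rewrite (brE hx hy) (brE hy hx) (epsV a b); vsolve. Qed.

Lemma jacobi_h a b c x y z : x \in Ag a -> y \in Ag b -> z \in Ag c ->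
  eps c a *: br x (br y z) + eps b c *: br z (br x y)
  + eps a b *: br y (br z x) = 0.
Proof.
move=> hx hy hz.
rewrite (brE hx (brmem hy hz)) (brE hz (brmem hx hy)) (brE hy (brmem hz hx)).
rewrite (brE hy hz) (brE hx hy) (brE hz hx).
lin.
rewrite (PLsolve hx hy hz) (PLsolve hy hz hx) (PLsolve hz hx hy).
rewrite ?epsDl ?epsDr (epsV c a) (epsV b c) (epsV a b).
vsolve.
Qed.

Lemma dotS a b x y : x \in Ag a -> y \in Ag b -> dot x y = sym_prod eps diamond a b x y.
Proof. exact: Hdot. Qed.
Lemma brS a b x y : x \in Ag a -> y \in Ag b -> br x y = skew_prod eps star a b x y.
Proof. exact: Hbr. Qed.

Lemma P_F a b c x y z : x \in Ag a -> y \in Ag b -> z \in Ag c ->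
  Pop eps dot br a b x y z =
  F1 eps diamond star a b x y z + eps b c *: F1 eps diamond star a c x z y
  + eps a (b + c) *: F2 eps diamond star b c y z x.
Proof.
move=> hx hy hz.
rewrite /Pop (brE hx (dotmem hy hz)) (dotE (brmem hx hy) hz) (dotE hy (brmem hx hz)).
rewrite (dotE hy hz) (brE hx hy) (brE hx hz) /F1 /F2 /sym_prod /skew_prod.
rewrite ?epsDl ?epsDr (epsV a b).
vsolve.
Qed.

Lemma Pop_mem a b c x y z : x \in Ag a -> y \in Ag b -> z \in Ag c ->
  Pop eps dot br a b x y z \in Ag (a + (b + c)).
Proof.
move=> hx hy hz; rewrite /Pop; apply: memvB; [apply: memvB|apply: memvZ].
- exact: brmem hx (dotmem hy hz).
- rewrite addrA; exact: dotmem (brmem hx hy) hz.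
- rewrite addrCA; exact: dotmem hy (brmem hx hz).
Qed.

Lemma fman_h a b c d x y z w :
  x \in Ag a -> y \in Ag b -> z \in Ag c -> w \in Ag d ->
  Pop eps dot br (a + b) c (dot x y) z w =
  dot x (Pop eps dot br b c y z w) + eps a b *: dot y (Pop eps dot br a c x z w).
Proof.
move=> hx hy hz hw.
rewrite (P_F (dotmem hx hy) hz hw) (dotE hx (Pop_mem hy hz hw)) (dotE hy (Pop_mem hx hz hw)).
rewrite (P_F hy hz hw) (P_F hx hz hw) (HF2 hy hz hw hx) (HF2 hx hz hw hy).
rewrite (dotS hx hy) (HF1 hx hy hz hw) (HF1 hx hy hw hz).
rewrite /F1 /F2 /sym_prod /skew_prod.
rewrite ?epsDl ?epsDr (epsV a b).
vsolve.
Qed.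

Lemma homog_ext (f g : A -> A) :
  (forall u v, f (u + v) = f u + f v) -> (forall u v, g (u + v) = g u + g v) ->
  (forall a v, v \in Ag a -> f v = g v) -> forall v, f v = g v.
Proof.
move=> hf hg h v; case: Hgr => dec _; case: (dec v) => s [_ [F [hF ->]]].
have f0 : f 0 = 0 by apply: (addrI (f 0)); rewrite -hf !addr0.
have g0 : g 0 = 0 by apply: (addrI (g 0)); rewrite -hg !addr0.
elim: s => [|a s IH]; first by rewrite big_nil f0 g0.
by rewrite big_cons hf hg IH (h a).
Qed.

Lemma assoc_all x y z : dot (dot x y) z = dot x (dot y z).
Proof.
move: x; apply: (@homog_ext (fun x => dot (dot x y) z) (fun x => dot x (dot y z)))
  => [u v|u v|a x hx] /=; [vsolve|vsolve|].
move: y; apply: (@homog_ext (fun y => dot (dot x y) z) (fun y => dot x (dot y z)))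
  => [u v|u v|b y hy] /=; [vsolve|vsolve|].
move: z; apply: (@homog_ext (fun z => dot (dot x y) z) (fun z => dot x (dot y z)))
  => [u v|u v|c z hz] /=; [vsolve|vsolve|].
exact: assoc_h hx hy hz.
Qed.

Lemma rho_all a b x y v : x \in Ag a -> y \in Ag b ->
  star (br x y) v = star x (star y v) - eps a b *: star y (star x v).
Proof.
move=> hx hy; move: v.
apply: (@homog_ext (fun v => star (br x y) v)
   (fun v => star x (star y v) - eps a b *: star y (star x v)))
  => [u v|u v|c v hv] /=; [vsolve|vsolve|].
rewrite (brE hx hy); lin; rewrite (PLsolve hx hy hv); vsolve.
Qed.

Lemma mu_all x y v : diamond (dot x y) v = diamond x (diamond y v).
Proof.
move: x; apply: (@homog_ext (fun x => diamond (dot x y) v) (fun x => diamond x (diamond y v)))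
  => [u w|u w|a x hx] /=; [vsolve|vsolve|].
move: y; apply: (@homog_ext (fun y => diamond (dot x y) v) (fun y => diamond x (diamond y v)))
  => [u w|u w|b y hy] /=; [vsolve|vsolve|].
move: v; apply: (@homog_ext (fun v => diamond (dot x y) v) (fun v => diamond x (diamond y v)))
  => [u w|u w|c v hv] /=; [vsolve|vsolve|].
by rewrite (dotE hx hy) (opDl Bd) (opZl Bd) (Zin hx hy hv).
Qed.

Lemma Rop_F1 a b x y v : x \in Ag a -> y \in Ag b ->
  Rop eps br star diamond a b x y v = F1 eps diamond star a b x y v.
Proof. by move=> hx hy; rewrite /Rop /F1 (brS hx hy). Qed.

Lemma Sop_F2 a b x y v : x \in Ag a -> y \in Ag b ->
  Sop eps dot star diamond a b x y v = F2 eps diamond star a b x y v.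
Proof. by move=> hx hy; rewrite /Sop /F2 (dotS hx hy). Qed.

Lemma R_all a1 a2 a3 x1 x2 x3 v :
  x1 \in Ag a1 -> x2 \in Ag a2 -> x3 \in Ag a3 ->
  Rop eps br star diamond (a1 + a2) a3 (dot x1 x2) x3 v =
  diamond x1 (Rop eps br star diamond a2 a3 x2 x3 v)
  + eps a1 a2 *: diamond x2 (Rop eps br star diamond a1 a3 x1 x3 v).
Proof.
move=> h1 h2 h3; move: v.
apply: (@homog_ext (fun v => Rop eps br star diamond (a1 + a2) a3 (dot x1 x2) x3 v)
  (fun v => diamond x1 (Rop eps br star diamond a2 a3 x2 x3 v)
  + eps a1 a2 *: diamond x2 (Rop eps br star diamond a1 a3 x1 x3 v)))
  => [u w|u w|d v hv] /=; [rewrite /Rop; vsolve|rewrite /Rop; vsolve|].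
rewrite (Rop_F1 _ (dotmem h1 h2) h3) (Rop_F1 _ h2 h3) (Rop_F1 _ h1 h3) (dotS h1 h2).
exact: HF1 h1 h2 h3 hv.
Qed.

Lemma P_all a1 a2 a3 x1 x2 x3 v :
  x1 \in Ag a1 -> x2 \in Ag a2 -> x3 \in Ag a3 ->
  diamond (Pop eps dot br a1 a2 x1 x2 x3) v =
  eps a1 (a2 + a3) *: Sop eps dot star diamond a2 a3 x2 x3 (diamond x1 v)
  - diamond x1 (Sop eps dot star diamond a2 a3 x2 x3 v).
Proof.
move=> h1 h2 h3; move: v.
apply: (@homog_ext (fun v => diamond (Pop eps dot br a1 a2 x1 x2 x3) v)
  (fun v => eps a1 (a2 + a3) *: Sop eps dot star diamond a2 a3 x2 x3 (diamond x1 v)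
  - diamond x1 (Sop eps dot star diamond a2 a3 x2 x3 v)))
  => [u w|u w|d v hv] /=; [vsolve|rewrite /Sop; vsolve|].
rewrite (P_F h1 h2 h3) !(Sop_F2 _ h2 h3).
exact: HF2 h1 h2 h3 hv.
Qed.

Lemma main_sec : F_manifold_color Ag eps dot br /\ FM_rep Ag eps Ag dot br star diamond.
Proof.
split.
  split.
  - split; first by split; [exact: Bdot | move=> *; exact: dotmem].
      exact: assoc_all.
    move=> *; exact: comm_h.
  - split; first by split; [exact: Bbr | move=> *; exact: brmem].
      move=> *; exact: skew_h.
    move=> *; exact: jacobi_h.
  - move=> a b c d x y z w hx hy hz hw; exact: fman_h hx hy hz hw.
split; first exact: Hgr.
split.
  split => [x k u v|k x y v|a b x v hx hv]; [exact: Bs.2 | exact: Bs.1 |].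
  rewrite addrC; exact: smem.
split.
  split => [x k u v|k x y v|a b x v hx hv]; [exact: Bd.2 | exact: Bd.1 |].
  rewrite addrC; exact: dmem.
split.
- move=> *; exact: rho_all.
- move=> *; exact: mu_all.
- move=> *; exact: R_all.
- move=> *; exact: P_all.
Qed.
End Main.

Theorem theorem4p4 (G : zmodType) (K : closedFieldType) (A : vectType K)
    (Ag : G -> {vspace A}) (eps : G -> G -> K)
    (diamond star dot br : A -> A -> A) :
  [pchar K] =i pred0 ->
  skew_bichar eps ->
  grading Ag ->
  preF_color Ag eps diamond star ->
  bilinear_op dot -> bilinear_op br ->
  (forall a b x y, x \in Ag a -> y \in Ag b ->
     dot x y = sym_prod eps diamond a b x y) ->
  (forall a b x y, x \in Ag a -> y \in Ag b ->
     br x y = skew_prod eps star a b x y) ->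
  F_manifold_color Ag eps dot br /\
  FM_rep Ag eps Ag dot br (fun x y => star x y) (fun x y => diamond x y).
Proof.
move=> _ He Hg Hp Bd Bb Hd Hb; exact: main_sec.
Qed.
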